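(* Let $\kappa$ be a regular cardinal and let $\mathcal{T}$ be a countable complete first-order theory in a countable relational vocabulary $L$. Suppose that for every $\alpha<\kappa^+$ there are $\eta,\eta'\in\kappa^\kappa$ such that $M_\eta\models\mathcal{T}$, $M_{\eta'}\models\mathcal{T}$, $M_\eta\equiv^\alpha_{\kappa^+\kappa}M_{\eta'}$ and $M_\eta\not\cong M_{\eta'}$. Then the relation $\cong_{\mathcal{T}}\subseteq\kappa^\kappa\times\kappa^\kappa$ is not $\kappa$-Borel.
   Context: Coding of structures: $L=\{Q_m\mid m<\omega\}$ is a countable relational vocabulary and $\pi:\kappa^{<\omega}\to\kappa$ is a fixed bijection. For $\eta\in\kappa^\kappa$, $M_\eta$ is the $L$-structure with domain $\kappa$ in which, for $(a_1,\dots,a_n)\in\kappa^n$, $(a_1,\dots,a_n)\in Q_m^{M_\eta}$ iff $Q_m$ has arity $n$ and $\eta(\pi(m,a_1,\dots,a_n))>0$. The relation $\cong_{\mathcal{T}}$ is the set of pairs $(\eta,\xi)\in\kappa^\kappa\times\kappa^\kappa$ such that either ($M_\eta\models\mathcal{T}$, $M_\xi\models\mathcal{T}$ and $M_\eta\cong M_\xi$) or ($M_\eta\not\models\mathcal{T}$ and $M_\xi\not\models\mathcal{T}$). $M\equiv^\alpha_{\kappa^+\kappa}N$ means $M$ and $N$ satisfy the same $L_{\kappa^+\kappa}$-sentences of quantifier rank at most $\alpha$. Topology: for $X\subseteq\kappa$ with $|X|<\kappa$ and $\eta:X\to\kappa$, let $N_\eta=\{\zeta\in\kappa^\kappa\mid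 \eta\subseteq\zeta\}$; these sets together with $\emptyset$ are the basic $\kappa$-open subsets of $\kappa^\kappa$, and the basic $\kappa$-open subsets of $\kappa^\kappa\times\kappa^\kappa$ are the products $N_\eta\times N_\xi$ of basic $\kappa$-open sets. The $\kappa$-Borel sets (of $\kappa^\kappa$, resp. $\kappa^\kappa\times\kappa^\kappa$) form the smallest class containing the basic $\kappa$-open sets and closed under complements, unions of at most $\kappa$ sets and intersections of at most $\kappa$ sets. *)

(* Defs.v *)
(* Generalized descriptive set theory setting: kappa is
   represented by a type K with a well-order lt whose order type is the
   initial ordinal kappa. *)
From Stdlib Require Import List Arith.
Import ListNotations.


Definition injective {A B : Type} (f : A -> B) : Prop :=
  forall x y, f x = f y -> x = y.

Definition surjective {A B : Type} (f : A -> B) : Prop :=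
  forall y, exists x, f x = y.

Definition bijective {A B : Type} (f : A -> B) : Prop :=
  injective f /\ surjective f.

Definition smaller {K : Type} (X : K -> Prop) : Prop :=
  ~ exists f : K -> {x : K | X x}, injective f.

Definition well_order {W : Type} (lt : W -> W -> Prop) : Prop :=
  well_founded lt
  /\ (forall x, ~ lt x x)
  /\ (forall x y z, lt x y -> lt y z -> lt x z)
  /\ (forall x y, lt x y \/ x = y \/ lt y x).

(* (K, lt) is an infinite regular cardinal: an infinite initial ordinal
   in which every subset of size < kappa is bounded. *)
Definition regular_cardinal {K : Type} (lt : K -> K -> Prop) : Prop :=
  well_order lt
  /\ (exists f : nat -> K, injective f)
  /\ (forall x : K, smaller (fun y => lt y x))
  /\ (forall X : K -> Prop, smaller X -> exists y, forall x, X x -> lt x y).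

Definition canonical_omega {K : Type} (lt : K -> K -> Prop) (iota : nat -> K) : Prop :=
  (forall n, lt (iota n) (iota (S n)))
  /\ (forall n x, lt x (iota n) -> exists m, x = iota m).

Record structure := Structure {
  dom : Type;
  rel : nat -> list dom -> Prop
}.

Definition isomorphic (arity : nat -> nat) (M N : structure) : Prop :=
  exists f : dom M -> dom N, bijective f /\
    forall m (l : list (dom M)), length l = arity m ->
      (rel M m l <-> rel N m (map f l)).

Inductive fo_form : Type :=
| fatom : nat -> list nat -> fo_form
| feq : nat -> nat -> fo_form
| fneg : fo_form -> fo_form
| fand : fo_form -> fo_form -> fo_form
| fex : nat -> fo_form -> fo_form.

Fixpoint ffree (f : fo_form) (v : nat) : Prop :=
  match f with
  | fatom _ vs => In v vs
  | feq x y => v = x \/ v = y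
  | fneg g => ffree g v
  | fand g h => ffree g v \/ ffree h v
  | fex n g => ffree g v /\ v <> n
  end.

Definition fo_sentence (f : fo_form) : Prop := forall v, ~ ffree f v.

Fixpoint fsat (arity : nat -> nat) (M : structure) (s : nat -> dom M) (f : fo_form) : Prop :=
  match f with
  | fatom m vs => length vs = arity m /\ rel M m (map s vs)
  | feq x y => s x = s y
  | fneg g => ~ fsat arity M s g
  | fand g h => fsat arity M s g /\ fsat arity M s h
  | fex n g => exists d : dom M,
      fsat arity M (fun k => if Nat.eqb k n then d else s k) g
  end.

(* M |= T  (structures have nonempty domains) *)
Definition models (arity : nat -> nat) (T : fo_form -> Prop) (M : structure) : Prop :=
  inhabited (dom M) /\ forall f, T f -> forall s, fsat arity M s f.

(* complete theory: consistent, and decides every sentence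
   (semantically, equivalent to syntactic completeness by the completeness theorem) *)
Definition complete_theory (arity : nat -> nat) (T : fo_form -> Prop) : Prop :=
  (exists M, models arity T M)
  /\ forall f, fo_sentence f ->
       (forall M, models arity T M -> forall s, fsat arity M s f)
       \/ (forall M, models arity T M -> forall s, fsat arity M s (fneg f)).

(* variables are indexed by K; conjunctions over subsets of K (at most kappa
   formulas); quantification over sets of fewer than kappa variables. *)

Inductive inf_form (K : Type) : Type :=
| iatom : nat -> list K -> inf_form K
| ieq : K -> K -> inf_form K
| ineg : inf_form K -> inf_form K
| iconj : (K -> Prop) -> (K -> inf_form K) -> inf_form K
| iex : (K -> Prop) -> inf_form K -> inf_form K.
Arguments iatom {K}. Arguments ieq {K}. Arguments ineg {K}.
Arguments iconj {K}. Arguments iex {K}.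

Fixpoint iwf {K : Type} (f : inf_form K) : Prop :=
  match f with
  | iatom _ _ => True
  | ieq _ _ => True
  | ineg g => iwf g
  | iconj P fs => forall i, P i -> iwf (fs i)
  | iex X g => smaller X /\ iwf g
  end.

Fixpoint ifree {K : Type} (f : inf_form K) (v : K) : Prop :=
  match f with
  | iatom _ vs => In v vs
  | ieq x y => v = x \/ v = y
  | ineg g => ifree g v
  | iconj P fs => exists i, P i /\ ifree (fs i) v
  | iex X g => ifree g v /\ ~ X v
  end.

Definition inf_sentence {K : Type} (f : inf_form K) : Prop := forall v, ~ ifree f v.

Fixpoint isat {K : Type} (arity : nat -> nat) (M : structure) (s : K -> dom M)
  (f : inf_form K) : Prop :=
  match f with
  | iatom m vs => length vs = arity m /\ rel M m (map s vs)
  | ieq x y => s x = s y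
  | ineg g => ~ isat arity M s g
  | iconj P fs => forall i, P i -> isat arity M s (fs i)
  | iex X g => exists s' : K -> dom M,
      (forall v, ~ X v -> s' v = s v) /\ isat arity M s' g
  end.

(* quantifier rank <= alpha, where alpha is an element of a well-order W
   (representing the ordinal given by its initial segment) *)
Fixpoint rank_le {K W : Type} (ltW : W -> W -> Prop) (alpha : W) (f : inf_form K) : Prop :=
  match f with
  | iatom _ _ => True
  | ieq _ _ => True
  | ineg g => rank_le ltW alpha g
  | iconj P fs => forall i, P i -> rank_le ltW alpha (fs i)
  | iex _ g => exists beta, ltW beta alpha /\ rank_le ltW beta g
  end.

Definition inf_equiv (K : Type) {W : Type} (ltW : W -> W -> Prop) (alpha : W)
  (arity : nat -> nat) (M N : structure) : Prop :=
  forall f : inf_form K, iwf f -> inf_sentence f -> rank_le ltW alpha f ->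
    ((forall s, isat arity M s f) <-> (forall s, isat arity N s f)).

(* M_eta: domain K, (a_1..a_n) in Q_m iff n = arity m and eta(pi(m,a_1,..,a_n)) > 0 *)
Definition M_of {K : Type} (lt : K -> K -> Prop) (iota : nat -> K) (pi : list K -> K)
  (arity : nat -> nat) (eta : K -> K) : structure :=
  {| dom := K;
     rel := fun m l => length l = arity m /\ exists y, lt y (eta (pi (iota m :: l))) |}.

Definition iso_T {K : Type} (lt : K -> K -> Prop) (iota : nat -> K) (pi : list K -> K)
  (arity : nat -> nat) (T : fo_form -> Prop) (z : (K -> K) * (K -> K)) : Prop :=
  let Me := M_of lt iota pi arity (fst z) in
  let Mx := M_of lt iota pi arity (snd z) in
  (models arity T Me /\ models arity T Mx /\ isomorphic arity Me Mx)
  \/ (~ models arity T Me /\ ~ models arity T Mx).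

Definition nbhd {K : Type} (X : K -> Prop) (p : K -> K) (z : K -> K) : Prop :=
  forall x, X x -> z x = p x.

Inductive kBorel {K : Type} : ((K -> K) * (K -> K) -> Prop) -> Prop :=
| kb_empty : kBorel (fun _ => False)
| kb_basic (X : K -> Prop) (p : K -> K) (Y : K -> Prop) (q : K -> K) :
    smaller X -> smaller Y ->
    kBorel (fun z => nbhd X p (fst z) /\ nbhd Y q (snd z))
| kb_compl (A : (K -> K) * (K -> K) -> Prop) :
    kBorel A -> kBorel (fun z => ~ A z)
| kb_union (F : K -> (K -> K) * (K -> K) -> Prop) :
    (forall i, kBorel (F i)) -> kBorel (fun z => exists i, F i z)
| kb_inter (F : K -> (K -> K) * (K -> K) -> Prop) :
    (forall i, kBorel (F i)) -> kBorel (fun z => forall i, F i z)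
| kb_ext (A B : (K -> K) * (K -> K) -> Prop) :
    kBorel A -> (forall z, A z <-> B z) -> kBorel B.

(* Main.v *)
Require Import Defs.
From Stdlib Require Import List Arith.
From Stdlib Require Import ClassicalEpsilon ProofIrrelevance FunctionalExtensionality PropExtensionality Classical.
From Stdlib Require Import Relation_Operators Lexicographic_Product Eqdep Wf_nat.
Import ListNotations.

Section Main.
Variable K : Type.
Variable lt : K -> K -> Prop.
Hypothesis Hreg : regular_cardinal lt.
Variable iota : nat -> K.
Hypothesis Hiota : canonical_omega lt iota.
Variable pi : list K -> K.
Hypothesis Hpi : bijective pi.
Variable arity : nat -> nat.

Definition em := excluded_middle_informative.

Lemma lt_wf : well_founded lt. Proof. apply Hreg. Qed.
Lemma lt_irr : forall x, ~ lt x x. Proof. apply Hreg. Qed.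
Lemma lt_trans : forall x y z, lt x y -> lt y z -> lt x z. Proof. apply Hreg. Qed.
Lemma lt_tri : forall x y, lt x y \/ x = y \/ lt y x. Proof. apply Hreg. Qed.

Definition le a b := lt a b \/ a = b.

Lemma le_refl : forall a, le a a. Proof. right; auto. Qed.
Lemma le_trans : forall a b c, le a b -> le b c -> le a c.
Proof. unfold le; intros a b c [H|H] [H'|H']; subst; eauto using lt_trans. Qed.
Lemma le_lt_trans : forall a b c, le a b -> lt b c -> lt a c.
Proof. unfold le; intros a b c [H|H] H'; subst; eauto using lt_trans. Qed.
Lemma lt_le_trans : forall a b c, lt a b -> le b c -> lt a c.
Proof. unfold le; intros a b c H [H'|H']; subst; eauto using lt_trans. Qed.
Lemma not_lt_le : forall a b, ~ lt a b -> le b a.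
Proof. intros a b H. destruct (lt_tri a b) as [h|[h|h]]; [tauto| right; auto| left; auto]. Qed.
Lemma le_not_lt : forall a b, le a b -> ~ lt b a.
Proof. intros a b [h|h] h'; subst. apply (lt_irr a); eauto using lt_trans. apply (lt_irr _ h'). Qed.

Lemma inhK : inhabited K. Proof. exact (inhabits (iota 0)). Qed.

Lemma min_exists : forall (P : K -> Prop) x, P x -> exists m, P m /\ forall y, P y -> ~ lt y m.
Proof.
  intros P x. induction x as [x IH] using (well_founded_ind lt_wf). intros Px.
  destruct (classic (exists y, lt y x /\ P y)) as [[y [h1 h2]]|h].
  - eauto.
  - exists x; split; auto. intros y Py hy; apply h; eauto.
Qed.

Definition pinv (k : K) : list K := epsilon (inhabits []) (fun l => pi l = k).
Lemma pi_pinv : forall k, pi (pinv k) = k.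
Proof. intros k. unfold pinv. apply (epsilon_spec (inhabits []) (fun l => pi l = k)). apply Hpi. Qed.
Lemma pinv_pi : forall l, pinv (pi l) = l.
Proof. intros l. apply Hpi. apply pi_pinv. Qed.

Lemma sub_small : forall (X Y : K -> Prop), (forall x, X x -> Y x) -> smaller Y -> smaller X.
Proof.
  intros X Y HXY HY [h hi]. apply HY.
  exists (fun k => exist Y (proj1_sig (h k)) (HXY _ (proj2_sig (h k)))).
  intros a b e. apply hi. apply (f_equal (@proj1_sig _ _)) in e. simpl in e.
  destruct (h a), (h b). simpl in e. subst.
  f_equal. apply proof_irrelevance.
Qed.

Lemma bounded_small : forall (X : K -> Prop) c, (forall x, X x -> lt x c) -> smaller X.
Proof. intros X c H. apply (sub_small X (fun y => lt y c) H). apply Hreg. Qed.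

Lemma small_bounded : forall X, smaller X -> exists c, forall x, X x -> lt x c.
Proof. apply Hreg. Qed.

Lemma iota_mono : forall n m, n < m -> lt (iota n) (iota m).
Proof.
  intros n m H. induction H. apply Hiota. eapply lt_trans; eauto. apply Hiota.
Qed.

Lemma iota_inj : forall n m, iota n = iota m -> n = m.
Proof.
  intros n m e. destruct (Nat.lt_trichotomy n m) as [h|[h|h]]; auto.
  - apply iota_mono in h; rewrite e in h; destruct (lt_irr _ h).
  - apply iota_mono in h; rewrite e in h; destruct (lt_irr _ h).
Qed.

Lemma single_small : forall a : K, smaller (fun x : K => x = a).
Proof.
  intros a [h hi].
  assert (iota 0 = iota 1).
  { apply hi. destruct (h (iota 0)) as [x1 e1], (h (iota 1)) as [x2 e2]. subst.
    f_equal; try apply proof_irrelevance. }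
  apply iota_inj in H. discriminate.
Qed.

Lemma no_max : forall a, exists c, lt a c.
Proof.
  intros a. destruct (small_bounded _ (single_small a)) as [c Hc]. exists c; auto.
Qed.

Definition bot : K := epsilon inhK (fun b => forall a, ~ lt a b).
Lemma bot_min : forall a, ~ lt a bot.
Proof.
  unfold bot. apply (epsilon_spec inhK (fun b => forall a, ~ lt a b)).
  destruct (min_exists (fun _ => True) (iota 0) I) as [m [_ hm]]. exists m; intros a; apply hm; auto.
Qed.
Lemma bot_le : forall a, le bot a.
Proof. intros a. apply not_lt_le. apply bot_min. Qed.

Definition succ (a : K) : K := epsilon inhK (fun c => lt a c /\ forall d, lt a d -> le c d).
Lemma succ_spec : forall a, lt a (succ a) /\ forall d, lt a d -> le (succ a) d.
Proof.
  intros a. unfold succ. apply (epsilon_spec inhK (fun c => lt a c /\ forall d, lt a d -> le c d)).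
  destruct (no_max a) as [c hc]. destruct (min_exists (fun c => lt a c) c hc) as [m [h1 h2]].
  exists m; split; auto. intros d hd. apply not_lt_le. intros h. exact (h2 d hd h).
Qed.
Lemma lt_succ : forall a, lt a (succ a). Proof. apply succ_spec. Qed.
Lemma lt_succ_iff : forall x a, lt x (succ a) <-> le x a.
Proof.
  intros x a; split.
  - intros h. apply not_lt_le. intros h'. pose proof (proj2 (succ_spec a) x h'). 
    apply (le_not_lt _ _ H h).
  - intros h. eapply le_lt_trans; eauto. apply lt_succ.
Qed.

Definition max2 (a b : K) : K := if em (lt a b) then b else a.
Lemma max2_l : forall a b, le a (max2 a b).
Proof. intros a b; unfold max2; destruct (em (lt a b)); [left|right]; auto. Qed.
Lemma max2_r : forall a b, le b (max2 a b).
Proof. intros a b; unfold max2; destruct (em (lt a b)). right; auto. apply not_lt_le; auto. Qed.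

Lemma bounded_union : forall (I : K -> Prop) (F : K -> K -> Prop), smaller I ->
  (forall i, I i -> exists c, forall v, F i v -> lt v c) ->
  exists c, forall i v, I i -> F i v -> lt v c.
Proof.
  intros I F HI HF.
  set (cb := fun i => epsilon inhK (fun c => I i -> forall v, F i v -> lt v c)).
  assert (Hcb : forall i, I i -> forall v, F i v -> lt v (cb i)).
  { intros i. unfold cb. apply (epsilon_spec inhK (fun c => I i -> forall v, F i v -> lt v c)).
    destruct (classic (I i)) as [h|h]. destruct (HF i h) as [c hc]; exists c; auto.
    exists bot; tauto. }
  assert (Hs : smaller (fun c => exists i, I i /\ c = cb i)).
  { intros [h hi]. apply HI.
    assert (forall k, {i | I i /\ proj1_sig (h k) = cb i}).
    { intros k. apply constructive_indefinite_description. destruct (h k) as [c [i [h1 h2]]]. simpl. eauto. }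
    exists (fun k => exist I (proj1_sig (X k)) (proj1 (proj2_sig (X k)))).
    intros a b e. apply hi. apply (f_equal (@proj1_sig _ _)) in e. simpl in e.
    destruct (X a) as [ia [ha1 ha2]], (X b) as [ib [hb1 hb2]]. simpl in e. subst ib.
    destruct (h a) as [ca pa], (h b) as [cb' pb]. simpl in *. subst.
    f_equal. apply proof_irrelevance. }
  destruct (small_bounded _ Hs) as [c Hc]. exists c. intros i v hi hv.
  eapply lt_trans. apply Hcb; eauto. apply Hc; eauto.
Qed.

Lemma list_bounded : forall l : list K, exists c, forall v, In v l -> lt v c.
Proof.
  induction l as [|a l [c IH]]. exists bot; simpl; tauto.
  exists (max2 (succ a) c). intros v [h|h]. subst. eapply lt_le_trans. apply lt_succ. apply max2_l.
  eapply lt_le_trans. apply IH; auto. apply max2_r.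
Qed.

Definition ok (b : K) (f : K -> K) := forall a a', lt a b -> lt a' b -> f a = f a' -> a = a'.
Definition ext (b : K) (f : K -> K) (b' : K) (g : K -> K) := le b b' /\ forall a, lt a b -> f a = g a.
Definition dense (D : K -> (K -> K) -> Prop) :=
  forall b f, ok b f -> exists b' g, ok b' g /\ ext b f b' g /\ D b' g.
Definition meets (s : K -> K) (D : K -> (K -> K) -> Prop) :=
  exists b g, D b g /\ forall a, lt a b -> g a = s a.

Lemma ext_refl : forall b f, ext b f b f.
Proof. intros; split; auto using le_refl. Qed.
Lemma ext_trans : forall b f b' g b'' h, ext b f b' g -> ext b' g b'' h -> ext b f b'' h.
Proof.
  intros b f b' g b'' h [h1 h2] [h3 h4]. split. eapply le_trans; eauto.
  intros a ha. rewrite h2; auto. apply h4. eapply lt_le_trans; eauto.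
Qed.

Definition cnd := (K * (K -> K))%type.
Definition okc (c : cnd) := ok (fst c) (snd c).
Definition extc (c c' : cnd) := ext (fst c) (snd c) (fst c') (snd c').

Lemma initial_small : forall i, smaller (fun j => lt j i).
Proof. apply Hreg. Qed.

Definition fresh (b : K) (f : K -> K) : K := epsilon inhK (fun v => forall a, lt a b -> f a <> v).
Lemma fresh_spec : forall b f a, lt a b -> f a <> fresh b f.
Proof.
  intros b f. unfold fresh. apply (epsilon_spec inhK (fun v => forall a, lt a b -> f a <> v)).
  destruct (bounded_union (fun a => lt a b) (fun a v => v = f a) (initial_small b)) as [c hc].
  { intros i _. exists (succ (f i)). intros v ->. apply lt_succ. }
  exists c. intros a ha e. pose proof (hc a c ha (eq_sym e)). exact (lt_irr _ H).
Qed.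

Definition ext1 (c : cnd) (i : K) : cnd :=
  (succ (fst c), fun a => if em (a = fst c) then
     (if em (exists a', lt a' (fst c) /\ snd c a' = i) then fresh (fst c) (snd c) else i)
     else snd c a).

Lemma ext1_ok : forall c i, okc c -> okc (ext1 c i).
Proof.
  intros [b f] i hc a a' ha ha' e. unfold ext1 in *; simpl in *.
  apply lt_succ_iff in ha, ha'.
  destruct (em (a = b)) as [h1|h1]; destruct (em (a' = b)) as [h2|h2]; subst; auto.
  - destruct ha' as [ha'|ha']; [|congruence].
    match goal with |- context [em ?P] => destruct (em P) as [h|h] | H : context [em ?P] |- _ => destruct (em P) as [h|h] end.
    + exfalso. apply (fresh_spec b f a' ha'); auto.
    + exfalso. apply h. eauto.
  - destruct ha as [ha|ha]; [|congruence].
    match goal with |- context [em ?P] => destruct (em P) as [h|h] | H : context [em ?P] |- _ => destruct (em P) as [h|h] end.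
    + exfalso. apply (fresh_spec b f a ha); auto.
    + exfalso. apply h. eauto.
  - destruct ha as [ha|ha]; [|congruence]. destruct ha' as [ha'|ha']; [|congruence]. auto.
Qed.

Lemma ext1_ext : forall c i, extc c (ext1 c i).
Proof.
  intros [b f] i. split; simpl. left; apply lt_succ.
  intros a ha. destruct (em (a = b)); auto. subst; destruct (lt_irr _ ha).
Qed.

Lemma ext1_lt : forall c i, lt (fst c) (fst (ext1 c i)).
Proof. intros; apply lt_succ. Qed.

Lemma ext1_ran : forall c i, exists a, lt a (fst (ext1 c i)) /\ snd (ext1 c i) a = i.
Proof.
  intros [b f] i. simpl. destruct (em (exists a', lt a' b /\ f a' = i)) as [[a' [h1 h2]]|h].
  - exists a'. split. eapply lt_trans; eauto; apply lt_succ.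
    destruct (em (a' = b)). subst; destruct (lt_irr _ h1). auto.
  - exists b. split. apply lt_succ. destruct (em (b = b)); [|congruence].
    destruct (em (exists a', lt a' b /\ f a' = i)); tauto.
Qed.

Section BCT.
Variable D : K -> K -> (K -> K) -> Prop.
Hypothesis HD : forall i, dense (D i).
Variable b0 : K.
Variable f0 : K -> K.
Hypothesis H0 : ok b0 f0.

Definition meetD (i : K) (c : cnd) : cnd :=
  if em (okc c) then epsilon (inhabits c) (fun c' => okc c' /\ extc c c' /\ D i (fst c') (snd c')) else c.
Lemma meetD_spec : forall i c, okc c -> okc (meetD i c) /\ extc c (meetD i c) /\ D i (fst (meetD i c)) (snd (meetD i c)).
Proof.
  intros i c hc. unfold meetD. destruct (em (okc c)); [|tauto].
  apply (epsilon_spec (inhabits c) (fun c' => okc c' /\ extc c c' /\ D i (fst c') (snd c'))).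
  destruct (HD i (fst c) (snd c) hc) as [b' [g [h1 [h2 h3]]]]. exists (b', g); auto.
Qed.

Definition ub (i : K) (prev : K -> cnd) (c : K) := le b0 c /\ forall j, lt j i -> le (fst (prev j)) c.
Definition lub (i : K) (prev : K -> cnd) : K := epsilon inhK (fun c => ub i prev c /\ forall c', ub i prev c' -> le c c').
Definition U (i : K) (prev : K -> cnd) : cnd :=
  (lub i prev, fun a => if em (lt a b0) then f0 a else
     snd (prev (epsilon inhK (fun j => lt j i /\ lt a (fst (prev j))))) a).

Lemma lub_spec : forall i prev, ub i prev (lub i prev) /\ forall c', ub i prev c' -> le (lub i prev) c'.
Proof.
  intros i prev. unfold lub.
  apply (epsilon_spec inhK (fun c => ub i prev c /\ forall c', ub i prev c' -> le c c')).
  destruct (bounded_union (fun j => lt j i) (fun j v => v = fst (prev j)) (initial_small i)) as [c1 hc1].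
  { intros j _. exists (succ (fst (prev j))). intros v ->. apply lt_succ. }
  assert (ub i prev (max2 b0 c1)).
  { split. apply max2_l. intros j hj. left. eapply lt_le_trans. apply (hc1 j); eauto. apply max2_r. }
  destruct (min_exists _ _ H) as [m [hm1 hm2]]. exists m. split; auto.
  intros c' hc'. apply not_lt_le. intros h. exact (hm2 c' hc' h).
Qed.

Section Uprops.
Variable i : K.
Variable prev : K -> cnd.
Hypothesis Hp1 : forall j, lt j i -> okc (prev j) /\ extc (b0, f0) (prev j).
Hypothesis Hp2 : forall j j', lt j i -> lt j' i -> lt j j' -> extc (prev j) (prev j').

Lemma U_cover : forall a, lt a (fst (U i prev)) -> lt a b0 \/ exists j, lt j i /\ lt a (fst (prev j)).
Proof.
  intros a ha. simpl in ha. apply NNPP. intros h.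
  assert (ub i prev a).
  { split. apply not_lt_le. intros h'. apply h; auto.
    intros j hj. apply not_lt_le. intros h'. apply h; eauto. }
  apply (proj2 (lub_spec i prev)) in H. exact (le_not_lt _ _ H ha).
Qed.

Lemma coh : forall j j' a, lt j i -> lt j' i -> lt a (fst (prev j)) -> lt a (fst (prev j')) ->
  snd (prev j) a = snd (prev j') a.
Proof.
  intros j j' a hj hj' h h'. destruct (lt_tri j j') as [e|[e|e]].
  - apply (Hp2 j j' hj hj' e); auto.
  - subst; auto.
  - symmetry. apply (Hp2 j' j hj' hj e); auto.
Qed.

Lemma U_agree : forall j a, lt j i -> lt a (fst (prev j)) -> snd (U i prev) a = snd (prev j) a.
Proof.
  intros j a hj ha. simpl. destruct (em (lt a b0)) as [h|h].
  - apply (proj2 (proj2 (Hp1 j hj))); auto.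
  - set (js := epsilon inhK (fun j => lt j i /\ lt a (fst (prev j)))).
    assert (lt js i /\ lt a (fst (prev js))).
    { apply (epsilon_spec inhK (fun j => lt j i /\ lt a (fst (prev j)))). eauto. }
    apply coh; tauto.
Qed.

Lemma U_ext : forall j, lt j i -> extc (prev j) (U i prev).
Proof.
  intros j hj. split. simpl. apply (proj2 (proj1 (lub_spec i prev))); auto.
  intros a ha. symmetry. apply U_agree; auto.
Qed.

Lemma U_ext0 : extc (b0, f0) (U i prev).
Proof.
  split. simpl. apply (proj1 (proj1 (lub_spec i prev))).
  intros a ha. simpl in *. destruct (em (lt a b0)); tauto.
Qed.

Lemma U_ok : okc (U i prev).
Proof.
  assert (Hlift : forall j a, lt j i -> lt a b0 -> lt a (fst (prev j))).
  { intros j a hj ha. eapply lt_le_trans; eauto. apply (proj1 (proj2 (Hp1 j hj))). }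
  assert (Hmono : forall j j' a, lt j i -> lt j' i -> le j j' -> lt a (fst (prev j)) -> lt a (fst (prev j'))).
  { intros j j' a hj hj' [e|e] ha; subst; auto. eapply lt_le_trans; eauto. apply (proj1 (Hp2 j j' hj hj' e)). }
  assert (Hin : forall j a a', lt j i -> lt a (fst (prev j)) -> lt a' (fst (prev j)) ->
            snd (U i prev) a = snd (U i prev) a' -> a = a').
  { intros j a a' hj h h' e. rewrite !(U_agree j) in e; auto. apply (proj1 (Hp1 j hj)); auto. }
  intros a a' ha ha' e.
  destruct (U_cover a ha) as [h|[j [hj h]]]; destruct (U_cover a' ha') as [h'|[j' [hj' h']]].
  - simpl in e. destruct (em (lt a b0)); [|tauto]. destruct (em (lt a' b0)); [|tauto]. apply H0; auto.
  - apply (Hin j' a a'); eauto.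
  - apply (Hin j a a'); eauto.
  - assert (hm : lt (max2 j j') i). { unfold max2; destruct (em (lt j j')); auto. }
    apply (Hin (max2 j j') a a'); auto. apply (Hmono j); auto. apply max2_l.
    apply (Hmono j'); auto. apply max2_r.
Qed.
End Uprops.

Definition step (i : K) (prev : K -> cnd) : cnd := ext1 (meetD i (U i prev)) i.
Definition Fdef (i : K) (rec : forall j, lt j i -> cnd) : cnd :=
  step i (fun j => match em (lt j i) with left h => rec j h | right _ => (b0, f0) end).
Definition seq : K -> cnd := Fix lt_wf (fun _ => cnd) Fdef.
Definition prevs (i : K) (j : K) : cnd := match em (lt j i) with left _ => seq j | right _ => (b0, f0) end.

Lemma seq_eq : forall i, seq i = step i (prevs i).
Proof.
  intros i. unfold seq. rewrite Fix_eq. reflexivity.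
  intros x f g H. unfold Fdef. f_equal. apply functional_extensionality. intros j.
  destruct (em (lt j x)); auto.
Qed.

Lemma prevs_lt : forall i j, lt j i -> prevs i j = seq j.
Proof. intros i j h. unfold prevs. destruct (em (lt j i)); tauto. Qed.

Definition Inv (i : K) :=
  okc (seq i) /\ extc (b0, f0) (seq i) /\
  (forall j, lt j i -> extc (seq j) (seq i) /\ lt (fst (seq j)) (fst (seq i))) /\
  (exists c, D i (fst c) (snd c) /\ extc c (seq i)) /\
  (exists a, lt a (fst (seq i)) /\ snd (seq i) a = i).

Lemma Inv_all : forall i, Inv i.
Proof.
  intros i. induction i as [i IH] using (well_founded_ind lt_wf).
  assert (Hp1 : forall j, lt j i -> okc (prevs i j) /\ extc (b0, f0) (prevs i j)).
  { intros j hj. rewrite prevs_lt; auto. split; apply IH; auto. }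
  assert (Hp2 : forall j j', lt j i -> lt j' i -> lt j j' -> extc (prevs i j) (prevs i j')).
  { intros j j' hj hj' e. rewrite !prevs_lt; auto. apply (IH j' hj'); auto. }
  pose proof (U_ok i (prevs i) Hp1 Hp2) as Uok.
  pose proof (U_ext i (prevs i) Hp1 Hp2) as Uext.
  pose proof (U_ext0 i (prevs i)) as Uext0.
  destruct (meetD_spec i _ Uok) as [Mok [Mext MD]].
  unfold Inv. rewrite (seq_eq i). unfold step.
  set (u := U i (prevs i)) in *. set (m := meetD i u) in *.
  split; [|split; [|split; [|split]]].
  - apply ext1_ok; auto.
  - eapply ext_trans. apply Uext0. eapply ext_trans. apply Mext. apply ext1_ext.
  - intros j hj. pose proof (Uext j hj) as e. rewrite prevs_lt in e; auto. split.
    + eapply ext_trans. apply e. eapply ext_trans. apply Mext. apply ext1_ext.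
    + eapply le_lt_trans. apply e. eapply le_lt_trans. apply Mext. apply ext1_lt.
  - exists m. split; auto. apply ext1_ext.
  - apply ext1_ran.
Qed.

Lemma seq_ge : forall i, le i (fst (seq i)).
Proof.
  intros i. induction i as [i IH] using (well_founded_ind lt_wf).
  apply not_lt_le. intros h.
  pose proof (proj2 (proj1 (proj2 (proj2 (Inv_all i))) _ h)).
  pose proof (IH _ h) as H1. apply (le_not_lt _ _ H1). auto.
Qed.

Lemma seq_coh : forall i j a, lt a (fst (seq i)) -> lt a (fst (seq j)) -> snd (seq i) a = snd (seq j) a.
Proof.
  intros i j a h h'. destruct (lt_tri i j) as [e|[e|e]].
  - apply (proj1 (proj1 (proj2 (proj2 (Inv_all j))) i e)); auto.
  - subst; auto.
  - symmetry. apply (proj1 (proj1 (proj2 (proj2 (Inv_all i))) j e)); auto.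
Qed.

Definition gen (a : K) : K := snd (seq (succ a)) a.

Lemma gen_in : forall a, lt a (fst (seq (succ a))).
Proof. intros a. eapply lt_le_trans. apply lt_succ. apply seq_ge. Qed.

Lemma gen_agree : forall i a, lt a (fst (seq i)) -> gen a = snd (seq i) a.
Proof. intros i a h. unfold gen. apply seq_coh; auto. apply gen_in. Qed.

Theorem BCT_gen : bijective gen /\ (forall a, lt a b0 -> gen a = f0 a) /\ forall i, meets gen (D i).
Proof.
  split; [split|split].
  - intros a a' e.
    set (i := max2 (succ a) (succ a')).
    assert (h1 : lt a (fst (seq i))). { eapply lt_le_trans. apply lt_succ. eapply le_trans. apply max2_l. apply seq_ge. }
    assert (h2 : lt a' (fst (seq i))). { eapply lt_le_trans. apply lt_succ. eapply le_trans. apply max2_r. apply seq_ge. }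
    rewrite (gen_agree i a h1), (gen_agree i a' h2) in e.
    apply (proj1 (Inv_all i)); auto.
  - intros y. destruct (proj2 (proj2 (proj2 (proj2 (Inv_all y))))) as [a [h1 h2]].
    exists a. rewrite (gen_agree y); auto.
  - intros a ha. unfold gen. symmetry. apply (proj2 (proj1 (proj2 (Inv_all (succ a))))). auto.
  - intros i. destruct (proj1 (proj2 (proj2 (proj2 (Inv_all i))))) as [c [h1 [h2 h3]]].
    exists (fst c), (snd c). split; auto. intros a ha. rewrite h3; auto.
    symmetry. apply gen_agree. eapply lt_le_trans; eauto.
Qed.
End BCT.

Theorem BCT : forall D : K -> K -> (K -> K) -> Prop, (forall i, dense (D i)) ->
  forall b0 f0, ok b0 f0 ->
  exists s, bijective s /\ (forall a, lt a b0 -> s a = f0 a) /\ forall i, meets s (D i).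
Proof. intros D HD b0 f0 H0. exists (gen D b0 f0). apply BCT_gen; auto. Qed.

Lemma isat_ext : forall (M : structure) (phi : inf_form K) (s s' : K -> dom M),
  (forall v, ifree phi v -> s v = s' v) -> (isat arity M s phi <-> isat arity M s' phi).
Proof.
  intros M phi. induction phi as [m vs|x y|g IH|P fs IH|X g IH]; intros s s' H; simpl in *.
  - assert (map s vs = map s' vs) as ->. { apply map_ext_in. auto. } tauto.
  - rewrite (H x), (H y); auto. tauto.
  - rewrite (IH s s' H). tauto.
  - split; intros h i hi; [rewrite <- (IH i s s')|rewrite (IH i s s')]; auto; intros v hv; apply H; eauto.
  - split; intros [s1 [h1 h2]].
    + exists (fun v => if em (X v) then s1 v else s' v). split.
      * intros v hv. destruct (em (X v)); tauto.
      * rewrite <- (IH s1); auto. intros v hv. destruct (em (X v)); auto.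
        rewrite h1; auto. 
    + exists (fun v => if em (X v) then s1 v else s v). split.
      * intros v hv. destruct (em (X v)); tauto.
      * rewrite <- (IH s1); auto. intros v hv. destruct (em (X v)); auto.
        rewrite h1; auto. symmetry; auto.
Qed.

Lemma rank_mono : forall {W} (ltW : W -> W -> Prop), (forall x y z, ltW x y -> ltW y z -> ltW x z) ->
  forall (phi : inf_form K) a a', rank_le ltW a phi -> (ltW a a' \/ a = a') -> rank_le ltW a' phi.
Proof.
  intros W ltW Ht phi. induction phi as [m vs|x y|g IH|P fs IH|X g IH]; intros a a' H Ha; simpl in *; auto.
  - eauto.
  - intros i hi; eauto.
  - destruct H as [b [h1 h2]]. exists b; split; auto. destruct Ha; subst; eauto.
Qed.

Lemma rank_emb : forall {W W'} (ltW : W -> W -> Prop) (ltW' : W' -> W' -> Prop) (h : W -> W'),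
  (forall x y, ltW x y -> ltW' (h x) (h y)) ->
  forall (phi : inf_form K) a, rank_le ltW a phi -> rank_le ltW' (h a) phi.
Proof.
  intros W W' ltW ltW' h Hh phi. induction phi as [m vs|x y|g IH|P fs IH|X g IH]; intros a H; simpl in *; auto.
  destruct H as [b [h1 h2]]. exists (h b); split; auto.
Qed.

Definition iTrue : inf_form K := iconj (fun _ => False) (fun _ => ieq bot bot).
Definition iFalse : inf_form K := ineg iTrue.
Definition iand (p q : inf_form K) : inf_form K := iconj (fun _ => True) (fun k => if em (k = bot) then p else q).
Definition ibigor (P : K -> Prop) (fs : K -> inf_form K) : inf_form K := ineg (iconj P (fun k => ineg (fs k))).

Lemma sat_iTrue : forall M (s : K -> dom M), isat arity M s iTrue.
Proof. intros; simpl; tauto. Qed.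
Lemma sat_iFalse : forall M (s : K -> dom M), ~ isat arity M s iFalse.
Proof. intros; simpl; tauto. Qed.
Lemma sat_iand : forall M (s : K -> dom M) p q, isat arity M s (iand p q) <-> isat arity M s p /\ isat arity M s q.
Proof.
  intros M s p q. simpl. split.
  - intros h. split. pose proof (h bot I). destruct (em (bot = bot)); tauto.
    pose proof (h (succ bot) I). destruct (em (succ bot = bot)) as [e|e]; auto.
    exfalso. pose proof (lt_succ bot). rewrite e in H0. exact (lt_irr _ H0).
  - intros [h1 h2] k _. destruct (em (k = bot)); auto.
Qed.
Lemma sat_ibigor : forall M (s : K -> dom M) P fs, isat arity M s (ibigor P fs) <-> exists k, P k /\ isat arity M s (fs k).
Proof.
  intros. simpl. split.
  - intros h. apply NNPP. intros h'. apply h. intros i hi hs. apply h'; eauto.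
  - intros [k [h1 h2]] h. exact (h k h1 h2).
Qed.

Lemma free_iTrue : forall v, ~ ifree iTrue v. Proof. intros v [i [h _]]; auto. Qed.
Lemma free_iand : forall p q v, ifree (iand p q) v -> ifree p v \/ ifree q v.
Proof. intros p q v [k [_ h]]. destruct (em (k = bot)); auto. Qed.
Lemma free_ibigor : forall P fs v, ifree (ibigor P fs) v -> exists k, P k /\ ifree (fs k) v.
Proof. intros P fs v [k [h1 h2]]. eauto. Qed.

Lemma iwf_iTrue : iwf iTrue. Proof. simpl; tauto. Qed.
Lemma iwf_iand : forall p q, iwf p -> iwf q -> iwf (iand p q).
Proof. intros p q h1 h2 k _. destruct (em (k = bot)); auto. Qed.
Lemma iwf_ibigor : forall P fs, (forall k, P k -> iwf (fs k)) -> iwf (ibigor P fs).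
Proof. intros P fs h k hk. simpl. auto. Qed.

Lemma rank_iTrue : forall {W} (ltW : W -> W -> Prop) a, rank_le ltW a iTrue.
Proof. intros; simpl; tauto. Qed.
Lemma rank_iand : forall {W} (ltW : W -> W -> Prop) a p q, rank_le ltW a p -> rank_le ltW a q -> rank_le ltW a (iand p q).
Proof. intros W ltW a p q h1 h2 k _. destruct (em (k = bot)); auto. Qed.
Lemma rank_ibigor : forall {W} (ltW : W -> W -> Prop) a P fs, (forall k, P k -> rank_le ltW a (fs k)) -> rank_le ltW a (ibigor P fs).
Proof. intros W ltW a P fs h k hk. simpl. auto. Qed.

Definition Inj (b : K) : inf_form K :=
  iconj (fun i => exists u v, i = pi [u; v] /\ lt u b /\ lt v b /\ u <> v)
        (fun i => match pinv i with [u; v] => ineg (ieq u v) | _ => iTrue end).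

Lemma sat_Inj : forall M (s : K -> dom M) b,
  isat arity M s (Inj b) <-> forall u v, lt u b -> lt v b -> s u = s v -> u = v.
Proof.
  intros M s b. simpl. split.
  - intros h u v hu hv e. apply NNPP. intros ne.
    pose proof (h (pi [u; v]) (ex_intro _ u (ex_intro _ v (conj eq_refl (conj hu (conj hv ne)))))).
    rewrite pinv_pi in H. simpl in H. auto.
  - intros h i [u [v [-> [hu [hv ne]]]]]. rewrite pinv_pi. simpl. intros e. apply ne; auto.
Qed.
Lemma free_Inj : forall b v, ifree (Inj b) v -> lt v b.
Proof.
  intros b v [i [[u [w [-> [hu [hw _]]]]] h]]. rewrite pinv_pi in h. simpl in h.
  destruct h; subst; auto.
Qed.
Lemma iwf_Inj : forall b, iwf (Inj b).
Proof. intros b i [u [w [-> _]]]. rewrite pinv_pi. simpl. auto. Qed.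
Lemma rank_Inj : forall {W} (ltW : W -> W -> Prop) a b, rank_le ltW a (Inj b).
Proof. intros W ltW a b i [u [w [-> _]]]. rewrite pinv_pi. simpl. auto. Qed.

Definition iv (b b' : K) (v : K) := ~ lt v b /\ lt v b'.
Definition Ext (b b' : K) (phi : inf_form K) : inf_form K := iex (iv b b') (iand (Inj b') phi).

Lemma sat_Ext : forall M (s : K -> dom M) b b' phi,
  isat arity M s (Ext b b' phi) <-> exists s', (forall v, ~ iv b b' v -> s' v = s v) /\
     (forall u v, lt u b' -> lt v b' -> s' u = s' v -> u = v) /\ isat arity M s' phi.
Proof.
  intros. unfold Ext. simpl isat at 1. split.
  - intros [s' [h1 h2]]. apply sat_iand in h2. rewrite sat_Inj in h2. exists s'; tauto.
  - intros [s' [h1 [h2 h3]]]. exists s'. split; auto. apply sat_iand. rewrite sat_Inj. auto.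
Qed.
Lemma free_Ext : forall b b' phi v, (forall w, ifree phi w -> lt w b') -> ifree (Ext b b' phi) v -> lt v b.
Proof.
  intros b b' phi v H [h1 h2]. apply free_iand in h1.
  assert (lt v b') by (destruct h1; [apply free_Inj|apply H]; auto).
  apply NNPP. intros h. apply h2. split; auto.
Qed.
Lemma iwf_Ext : forall b b' phi, iwf phi -> iwf (Ext b b' phi).
Proof.
  intros. simpl. split. apply (bounded_small _ b'). intros x [_ h]; auto.
  apply iwf_iand; auto. apply iwf_Inj.
Qed.
Lemma rank_Ext : forall {W} (ltW : W -> W -> Prop) a a' b b' phi, rank_le ltW a phi -> ltW a a' -> rank_le ltW a' (Ext b b' phi).
Proof.
  intros. simpl. exists a. split; auto. apply rank_iand; auto. apply rank_Inj.
Qed.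

Definition ForallExt (Psi : K -> inf_form K) (b : K) : inf_form K :=
  iconj (fun b' => le b b') (fun b' => ineg (Ext b b' (ineg (Psi b')))).
Definition ExistsExt (Psi : K -> inf_form K) (b : K) : inf_form K :=
  ibigor (fun b' => le b b') (fun b' => Ext b b' (Psi b')).

Definition loc (Phi : K -> inf_form K) := forall b v, ifree (Phi b) v -> lt v b.

Lemma loc_ForallExt : forall Psi, loc Psi -> loc (ForallExt Psi).
Proof.
  intros Psi H b v [b' [h1 h2]]. change (ifree (Ext b b' (ineg (Psi b'))) v) in h2.
  eapply free_Ext; [|exact h2]. intros w hw. apply (H b' w hw).
Qed.
Lemma loc_ExistsExt : forall Psi, loc Psi -> loc (ExistsExt Psi).
Proof.
  intros Psi H b v h. apply free_ibigor in h. destruct h as [b' [h1 h2]].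
  eapply free_Ext; [|exact h2]. intros w hw. apply (H b' w hw).
Qed.
Lemma iwf_ForallExt : forall Psi, (forall b, iwf (Psi b)) -> forall b, iwf (ForallExt Psi b).
Proof. intros Psi H b b' _. simpl. apply iwf_Ext. simpl. auto. Qed.
Lemma iwf_ExistsExt : forall Psi, (forall b, iwf (Psi b)) -> forall b, iwf (ExistsExt Psi b).
Proof. intros Psi H b. apply iwf_ibigor. intros. apply iwf_Ext. auto. Qed.
Lemma rank_ForallExt : forall {W} (ltW : W -> W -> Prop) a a' Psi, (forall b, rank_le ltW a (Psi b)) -> ltW a a' ->
  forall b, rank_le ltW a' (ForallExt Psi b).
Proof. intros W ltW a a' Psi H h b b' _. change (rank_le ltW a' (Ext b b' (ineg (Psi b')))). apply (rank_Ext ltW a). simpl; auto. auto. Qed.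
Lemma rank_ExistsExt : forall {W} (ltW : W -> W -> Prop) a a' Psi, (forall b, rank_le ltW a (Psi b)) -> ltW a a' ->
  forall b, rank_le ltW a' (ExistsExt Psi b).
Proof. intros W ltW a a' Psi H h b. apply rank_ibigor. intros. apply (rank_Ext ltW a); auto. Qed.

Definition Mx (x : K -> K) : structure := M_of lt iota pi arity x.
Definition sat (x : K -> K) (f : K -> K) (phi : inf_form K) : Prop := isat arity (Mx x) f phi.

Lemma sat_loc : forall x Phi, loc Phi -> forall b f g, (forall a, lt a b -> f a = g a) -> sat x f (Phi b) -> sat x g (Phi b).
Proof. intros x Phi H b f g e h. unfold sat in *. rewrite <- (isat_ext (Mx x) (Phi b) f g); auto. Qed.

Lemma ext_char : forall x (phi : inf_form K) b b' f, (forall w, ifree phi w -> lt w b') -> le b b' ->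
  (sat x f (Ext b b' phi) <-> exists g, ok b' g /\ ext b f b' g /\ sat x g phi).
Proof.
  intros x phi b b' f Hphi Hle. unfold sat. rewrite sat_Ext. split.
  - intros [s' [h1 [h2 h3]]]. exists s'. split; auto. split; auto. split; auto.
    intros a ha. symmetry. apply h1. intros [h _]; auto.
  - intros [g [h1 [[_ h2] h3]]].
    exists (fun v => if em (iv b b' v) then g v else f v). split; [|split].
    + intros v hv. destruct (em (iv b b' v)); tauto.
    + assert (E : forall v, lt v b' -> (if em (iv b b' v) then g v else f v) = g v).
      { intros v hv. destruct (em (iv b b' v)) as [h|h]; auto. apply h2. apply NNPP. intros h'. apply h; split; auto. }
      intros u v hu hv e. rewrite !E in e; auto.
    + rewrite (isat_ext (Mx x) phi _ g); auto. intros v hv. 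
      destruct (em (iv b b' v)) as [h|h]; auto. apply h2. apply NNPP. intros h'. apply h; split; auto.
Qed.

Lemma sat_ForallExt : forall x Psi b f, loc Psi ->
  (sat x f (ForallExt Psi b) <-> forall b' g, ok b' g -> ext b f b' g -> sat x g (Psi b')).
Proof.
  intros x Psi b f HL. unfold ForallExt. split.
  - intros h b' g hg [hle he]. assert (h1 : ~ sat x f (Ext b b' (ineg (Psi b')))) by exact (h b' hle).
    rewrite ext_char in h1; auto. apply NNPP. intros n. apply h1. exists g. split; auto. split. split; auto. exact n.
  - intros h b' hle. change (~ sat x f (Ext b b' (ineg (Psi b')))).
    rewrite ext_char; auto. intros [g [h1 [h2 h3]]]. apply h3. apply h; auto.
Qed.

Lemma sat_ExistsExt : forall x Psi b f, loc Psi ->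
  (sat x f (ExistsExt Psi b) <-> exists b' g, ok b' g /\ ext b f b' g /\ sat x g (Psi b')).
Proof.
  intros x Psi b f HL. unfold ExistsExt, sat. rewrite sat_ibigor. split.
  - intros [b' [hle h]]. change (sat x f (Ext b b' (Psi b'))) in h. rewrite ext_char in h; auto.
    destruct h as [g [h1 [h2 h3]]]. eauto.
  - intros [b' [g [h1 [h2 h3]]]]. exists b'. split. apply h2. change (sat x f (Ext b b' (Psi b'))).
    rewrite ext_char; auto. eauto. apply h2.
Qed.

Definition zero : K := bot.
Definition one : K := succ bot.
Definition pos (y : K) := exists z, lt z y.

Definition pull (s x : K -> K) : K -> K := fun d =>
  match pinv d with
  | k :: l => if em (exists m, k = iota m /\ length l = arity m /\ pos (x (pi (k :: map s l)))) then one else zero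
  | [] => zero
  end.

Definition SynW {W} (ltW : W -> W -> Prop) (a : W) (Phi : K -> inf_form K) :=
  (forall b, iwf (Phi b)) /\ loc Phi /\ forall b, rank_le ltW a (Phi b).

Definition Mono (x : K -> K) (Phi : K -> inf_form K) :=
  forall b f b' g, ok b' g -> ext b f b' g -> sat x f (Phi b) -> sat x g (Phi b').
Definition Closed (x : K -> K) (Phi : K -> inf_form K) :=
  forall b f, ok b f -> (forall b' g, ok b' g -> ext b f b' g -> exists b'' h, ok b'' h /\ ext b' g b'' h /\ sat x h (Phi b'')) ->
  sat x f (Phi b).
Definition Truth (S : (K -> K) -> Prop) (x : K -> K) (Phi : K -> inf_form K) :=
  exists D : K -> K -> (K -> K) -> Prop, (forall i, dense (D i)) /\
    forall s, bijective s -> (forall i, meets s (D i)) -> (S (pull s x) <-> exists b, sat x s (Phi b)).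

Definition Sem (S : (K -> K) -> Prop) (Phi : K -> inf_form K) :=
  forall x, Mono x Phi /\ Closed x Phi /\ Truth S x Phi.

Definition mergeD (E : K -> (K -> K) -> Prop) (D : K -> K -> (K -> K) -> Prop) : K -> K -> (K -> K) -> Prop :=
  fun i => match pinv i with [] => E | k :: _ => D k end.

Lemma mergeD_dense : forall E D, dense E -> (forall i, dense (D i)) -> forall i, dense (mergeD E D i).
Proof. intros E D h1 h2 i. unfold mergeD. destruct (pinv i); auto. Qed.
Lemma mergeD_meets : forall E D s, (forall i, meets s (mergeD E D i)) -> meets s E /\ forall k, meets s (D k).
Proof.
  intros E D s h. split.
  - pose proof (h (pi [])). unfold mergeD in H. rewrite pinv_pi in H. auto.
  - intros k. pose proof (h (pi [k])). unfold mergeD in H. rewrite pinv_pi in H. auto.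
Qed.

Lemma ok_inj : forall s b, bijective s -> ok b s.
Proof. intros s b [h _] a a' _ _ e. auto. Qed.
Lemma ext_same : forall s b b', le b b' -> ext b s b' s.
Proof. intros; split; auto. Qed.

Definition Neg (Phi : K -> inf_form K) : K -> inf_form K := ForallExt (fun b => ineg (Phi b)).

Lemma loc_neg : forall Phi, loc Phi -> loc (fun b => ineg (Phi b)).
Proof. intros Phi H b v h. apply (H b v h). Qed.

Lemma sat_Neg : forall x Phi b f, loc Phi ->
  (sat x f (Neg Phi b) <-> forall b' g, ok b' g -> ext b f b' g -> ~ sat x g (Phi b')).
Proof. intros. unfold Neg. rewrite sat_ForallExt. reflexivity. apply loc_neg; auto. Qed.

Lemma Neg_lemma : forall {W} (ltW : W -> W -> Prop) a a' Phi S,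
  SynW ltW a Phi -> ltW a a' -> Sem S Phi -> SynW ltW a' (Neg Phi) /\ Sem (fun y => ~ S y) (Neg Phi).
Proof.
  intros W ltW a a' Phi S [Hwf [Hloc Hrk]] Ha HS. split.
  { split; [|split].
    - apply iwf_ForallExt. intros b; simpl; auto.
    - apply loc_ForallExt. apply loc_neg; auto.
    - apply (rank_ForallExt ltW a); auto. }
  intros x. destruct (HS x) as [Hmono [Hcl [D [HDd HT]]]].
  split; [|split].
  - intros b f b' g hg he h. rewrite sat_Neg in *; auto.
    intros b'' h'' hh he' hs. apply (h b'' h''); auto. eapply ext_trans; eauto.
  - intros b f hf H. rewrite sat_Neg; auto. intros b' g hg he hs.
    destruct (H b' g hg he) as [b'' [h'' [hh [he' hs']]]].
    rewrite sat_Neg in hs'; auto. apply (hs' b'' h''); auto. apply ext_refl. apply (Hmono b' g); auto.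
  - set (E := fun b f => sat x f (Phi b) \/ sat x f (Neg Phi b)).
    assert (HE : dense E).
    { intros b f hf. destruct (classic (sat x f (Neg Phi b))) as [h|h].
      - exists b, f. split; auto. split. apply ext_refl. right; auto.
      - rewrite sat_Neg in h; auto. apply NNPP. intros n. apply h. intros b' g hg he hs. apply n.
        exists b', g. split; auto. split; auto. left; auto. }
    exists (mergeD E D). split. apply mergeD_dense; auto.
    intros s hs hm. apply mergeD_meets in hm. destruct hm as [[b1 [g [hE hg]]] hD].
    rewrite (HT s hs hD). split.
    + intros n. destruct hE as [h|h].
      * exfalso. apply n. exists b1. apply (sat_loc x Phi Hloc b1 g); auto.
      * exists b1. apply (sat_loc x (Neg Phi) (loc_ForallExt _ (loc_neg _ Hloc)) b1 g); auto.
    + intros [b hN] [b2 h2]. rewrite sat_Neg in hN; auto.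
      apply (hN (max2 b b2) s). apply ok_inj; auto. apply ext_same, max2_l.
      apply (Hmono b2 s). apply ok_inj; auto. apply ext_same, max2_r. auto.
Qed.

Definition Cl (Psi : K -> inf_form K) : K -> inf_form K := ForallExt (ExistsExt Psi).

Lemma sat_Cl : forall x Psi b f, loc Psi ->
  (sat x f (Cl Psi b) <-> forall b' g, ok b' g -> ext b f b' g -> exists b'' h, ok b'' h /\ ext b' g b'' h /\ sat x h (Psi b'')).
Proof.
  intros. unfold Cl. rewrite sat_ForallExt. 2: apply loc_ExistsExt; auto.
  split; intros h b' g hg he; specialize (h b' g hg he); rewrite sat_ExistsExt in *; auto.
Qed.

Definition PreSem (S : (K -> K) -> Prop) (Psi : K -> inf_form K) :=
  forall x, Mono x Psi /\ exists D : K -> K -> (K -> K) -> Prop, (forall i, dense (D i)) /\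
    forall s, bijective s -> (forall i, meets s (D i)) -> (S (pull s x) <-> exists b, sat x s (Psi b)).

Lemma Cl_lemma : forall {W} (ltW : W -> W -> Prop) a a1 a2 Psi S,
  SynW ltW a Psi -> ltW a a1 -> ltW a1 a2 -> PreSem S Psi -> SynW ltW a2 (Cl Psi) /\ Sem S (Cl Psi).
Proof.
  intros W ltW a a1 a2 Psi S [Hwf [Hloc Hrk]] Ha1 Ha2 HS. split.
  { split; [|split].
    - apply iwf_ForallExt. apply iwf_ExistsExt. auto.
    - apply loc_ForallExt. apply loc_ExistsExt; auto.
    - apply (rank_ForallExt ltW a1); auto. apply (rank_ExistsExt ltW a); auto. }
  intros x. destruct (HS x) as [Hmono [D [HDd HT]]].
  split; [|split].
  - intros b f b' g hg he h. rewrite sat_Cl in *; auto.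
    intros b'' h'' hh he'. apply h; auto. eapply ext_trans; eauto.
  - intros b f hf H. rewrite sat_Cl; auto. intros b' g hg he.
    destruct (H b' g hg he) as [b'' [h'' [hh [he' hs']]]].
    rewrite sat_Cl in hs'; auto. destruct (hs' b'' h'' hh (ext_refl _ _)) as [b3 [h3 [k1 [k2 k3]]]].
    exists b3, h3. split; auto. split; auto. eapply ext_trans; eauto.
  - set (E := fun b f => sat x f (Psi b) \/ forall b' g, ok b' g -> ext b f b' g -> ~ sat x g (Psi b')).
    assert (HE : dense E).
    { intros b f hf. destruct (classic (exists b' g, ok b' g /\ ext b f b' g /\ sat x g (Psi b'))) as [[b' [g [h1 [h2 h3]]]]|h].
      - exists b', g. split; auto. split; auto. left; auto.
      - exists b, f. split; auto. split. apply ext_refl. right. intros b' g hg he hs. apply h; eauto. }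
    exists (mergeD E D). split. apply mergeD_dense; auto.
    intros s hs hm. apply mergeD_meets in hm. destruct hm as [[b1 [g [hE hg]]] hD].
    rewrite (HT s hs hD). split.
    + intros [b hb]. exists b. rewrite sat_Cl; auto. intros b' g' hg' he'. exists b', g'. split; auto.
      split. apply ext_refl. apply (Hmono b s); auto.
    + intros [b hb]. destruct hE as [h|h].
      * exists b1. apply (sat_loc x Psi Hloc b1 g); auto.
      * exfalso. rewrite sat_Cl in hb; auto.
        destruct (hb (max2 b b1) s (ok_inj _ _ hs) (ext_same _ _ _ (max2_l _ _))) as [b3 [h3 [k1 [k2 k3]]]].
        apply (h b3 h3); auto. destruct k2 as [k2a k2b]. split.
        apply (le_trans _ (max2 b b1)). apply max2_r. auto.
        intros a0 ha0. rewrite hg; auto. apply k2b. eapply lt_le_trans; eauto. apply max2_r.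
Qed.

Definition upd {A : Type} (s : nat -> A) (n : nat) (d : A) : nat -> A := fun k => if Nat.eqb k n then d else s k.

Lemma fsat_iso : forall (M N : structure) (f : dom M -> dom N), bijective f ->
  (forall m (l : list (dom M)), length l = arity m -> (rel M m l <-> rel N m (map f l))) ->
  forall phi (s : nat -> dom M), fsat arity M s phi <-> fsat arity N (fun k => f (s k)) phi.
Proof.
  intros M N f [fi fs] Hr phi. induction phi as [m vs|x y|g IH|g1 IH1 g2 IH2|n g IH]; intros s; simpl.
  - rewrite <- (map_map s f). split; intros [h1 h2]; split; auto.
    apply Hr; auto. rewrite length_map; auto. apply (Hr m (map s vs)); auto. rewrite length_map; auto.
  - split; intros h. rewrite h; auto. apply fi; auto.
  - rewrite IH. tauto.
  - rewrite IH1, IH2. tauto.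
  - split.
    + intros [d h]. exists (f d). rewrite IH in h.
      assert (E : (fun k => f (if Nat.eqb k n then d else s k)) = (fun k => if Nat.eqb k n then f d else f (s k))).
      { apply functional_extensionality. intros k. destruct (Nat.eqb k n); auto. }
      rewrite E in h. auto.
    + intros [d' h]. destruct (fs d') as [d <-]. exists d. rewrite IH.
      assert (E : (fun k => f (if Nat.eqb k n then d else s k)) = (fun k => if Nat.eqb k n then f d else f (s k))).
      { apply functional_extensionality. intros k. destruct (Nat.eqb k n); auto. }
      rewrite E. auto.
Qed.

Lemma iso_sym : forall M N, isomorphic arity M N -> isomorphic arity N M.
Proof.
  intros M N [f [[fi fs] Hr]].
  assert (Hg : forall y, {x | f x = y}) by (intros y; apply constructive_indefinite_description; auto).
  set (g := fun y => proj1_sig (Hg y)).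
  assert (fg : forall y, f (g y) = y) by (intros y; unfold g; destruct (Hg y); auto).
  exists g. split. split.
  - intros a b e. rewrite <- (fg a), <- (fg b), e. auto.
  - intros x. exists (f x). apply fi. rewrite fg. auto.
  - intros m l hl. rewrite (Hr m (map g l)). rewrite map_map.
    assert (map (fun x => f (g x)) l = l) as ->. { rewrite <- (map_id l) at 2. apply map_ext. auto. }
    tauto. rewrite length_map; auto.
Qed.

Lemma iso_trans : forall M N P, isomorphic arity M N -> isomorphic arity N P -> isomorphic arity M P.
Proof.
  intros M N P [f [[fi fs] Hf]] [g [[gi gs] Hg]]. exists (fun x => g (f x)). split. split.
  - intros a b e. auto.
  - intros z. destruct (gs z) as [y <-]. destruct (fs y) as [x <-]. eauto.
  - intros m l hl. rewrite (Hf m l hl). rewrite (Hg m (map f l)). rewrite map_map. tauto.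
    rewrite length_map; auto.
Qed.

Lemma models_iso : forall T M N, isomorphic arity M N -> models arity T M -> models arity T N.
Proof.
  intros T M N [f [[fi fs] Hr]] [[d] H]. split. exact (inhabits (f d)).
  intros phi hphi s.
  assert (Hg : forall y, {x | f x = y}) by (intros y; apply constructive_indefinite_description; auto).
  set (s0 := fun k => proj1_sig (Hg (s k))).
  assert (E : (fun k => f (s0 k)) = s).
  { apply functional_extensionality. intros k. unfold s0. destruct (Hg (s k)); auto. }
  rewrite <- E. apply (fsat_iso M N f (conj fi fs) Hr). auto.
Qed.

Lemma one_ne_zero : one <> zero.
Proof. unfold one, zero. intros e. pose proof (lt_succ bot). rewrite e in H. exact (lt_irr _ H). Qed.
Lemma pos_one : pos one. Proof. exists bot. apply lt_succ. Qed.
Lemma not_pos_zero : ~ pos zero. Proof. intros [z h]. exact (bot_min z h). Qed.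

Lemma pull_iso : forall s x, bijective s -> isomorphic arity (Mx (pull s x)) (Mx x).
Proof.
  intros s x hs. exists s. split; auto. intros m l hl. simpl.
  unfold pull. rewrite pinv_pi. rewrite length_map.
  match goal with |- context [em ?P] => destruct (em P) as [h|h] end.
  - destruct h as [m' [e [h1 h2]]]. split; intros _; split; auto. apply pos_one.
  - split. intros [_ h']. exfalso. exact (not_pos_zero h').
    intros [_ h']. exfalso. apply h. exists m. auto.
Qed.

Lemma isoT_inv : forall T eta s xi, bijective s ->
  (iso_T lt iota pi arity T (eta, pull s xi) <-> iso_T lt iota pi arity T (eta, xi)).
Proof.
  intros T eta s xi hs. unfold iso_T. simpl. fold (Mx eta) (Mx (pull s xi)) (Mx xi).
  pose proof (pull_iso s xi hs) as I1. pose proof (iso_sym _ _ I1) as I2.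
  split; intros [[h1 [h2 h3]]|[h1 h2]].
  - left. split; auto. split. eapply models_iso; eauto. eapply iso_trans; eauto.
  - right. split; auto. intros h. apply h2. eapply models_iso; eauto.
  - left. split; auto. split. eapply models_iso; eauto. eapply iso_trans; eauto.
  - right. split; auto. intros h. apply h2. eapply models_iso; eauto.
Qed.

Lemma Sem_ext : forall S S' Phi, (forall y, S y <-> S' y) -> Sem S Phi -> Sem S' Phi.
Proof.
  intros S S' Phi E H x. destruct (H x) as [h1 [h2 [D [h3 h4]]]]. split; auto. split; auto.
  exists D. split; auto. intros s hs hm. rewrite <- E. auto.
Qed.

Definition BigOr (Phi : K -> K -> inf_form K) : K -> inf_form K := fun b => ibigor (fun _ => True) (fun i => Phi i b).

Lemma Union_lemma : forall {W} (ltW : W -> W -> Prop) a (Phi : K -> K -> inf_form K) (S : K -> (K -> K) -> Prop),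
  (forall i, SynW ltW a (Phi i)) -> (forall i, Sem (S i) (Phi i)) ->
  SynW ltW a (BigOr Phi) /\ PreSem (fun y => exists i, S i y) (BigOr Phi).
Proof.
  intros W ltW a Phi S Hsyn Hsem. split.
  { split; [|split].
    - intros b. apply iwf_ibigor. intros i _. apply Hsyn.
    - intros b v h. apply free_ibigor in h. destruct h as [i [_ h]]. apply (proj1 (proj2 (Hsyn i)) b v h).
    - intros b. apply rank_ibigor. intros i _. apply Hsyn. }
  intros x. split.
  - intros b f b' g hg he h. unfold sat, BigOr in *. rewrite sat_ibigor in *. destruct h as [i [_ h]].
    exists i. split; auto. apply (proj1 (Hsem i x) b f); auto.
  - assert (HD : forall i, {D : K -> K -> (K -> K) -> Prop | (forall j, dense (D j)) /\
       forall s, bijective s -> (forall j, meets s (D j)) -> (S i (pull s x) <-> exists b, sat x s (Phi i b))}).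
    { intros i. apply constructive_indefinite_description. apply (Hsem i x). }
    exists (fun k => match pinv k with [i; j] => proj1_sig (HD i) j | _ => fun _ _ => True end). split.
    + intros k. destruct (pinv k) as [|i [|j [|? ?]]]; try (intros b f hf; exists b, f; split; auto; split; auto; apply ext_refl).
      apply (proj2_sig (HD i)).
    + intros s hs hm.
      assert (hm' : forall i j, meets s (proj1_sig (HD i) j)).
      { intros i j. pose proof (hm (pi [i; j])). rewrite pinv_pi in H. auto. }
      split.
      * intros [i h]. rewrite (proj2 (proj2_sig (HD i)) s hs (hm' i)) in h. destruct h as [b h].
        exists b. unfold sat, BigOr. rewrite sat_ibigor. eauto.
      * intros [b h]. unfold sat, BigOr in h. rewrite sat_ibigor in h. destruct h as [i [_ h]].
        exists i. rewrite (proj2 (proj2_sig (HD i)) s hs (hm' i)). eauto.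
Qed.

Lemma Empty_lemma : forall {W} (ltW : W -> W -> Prop) a,
  SynW ltW a (fun _ => iFalse) /\ PreSem (fun _ => False) (fun _ => iFalse).
Proof.
  intros W ltW a. split.
  { split; [|split].
    - intros b. simpl. tauto.
    - intros b v h. exfalso. apply (free_iTrue v h).
    - intros b. simpl. tauto. }
  intros x. split.
  - intros b f b' g _ _ h. exfalso. apply (sat_iFalse _ _ h).
  - exists (fun _ _ _ => True). split.
    + intros k b f hf; exists b, f; split; auto; split; auto; apply ext_refl.
    + intros s _ _. split. tauto. intros [b h]. apply (sat_iFalse _ _ h).
Qed.

Definition mof (k : K) : nat := epsilon (inhabits 0) (fun m => k = iota m).

Section Basic.
Variable Y : K -> Prop.
Variable q : K -> K.
Hypothesis HY : smaller Y.

Definition theta0 (d : K) : inf_form K :=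
  match pinv d with
  | k :: l => if em (exists m, k = iota m /\ length l = arity m) then
                (if em (q d = one) then iatom (mof k) l
                 else if em (q d = zero) then ineg (iatom (mof k) l) else iFalse)
              else (if em (q d = zero) then iTrue else iFalse)
  | [] => if em (q d = zero) then iTrue else iFalse
  end.

Lemma theta0_iff : forall x s d, sat x s (theta0 d) <-> pull s x d = q d.
Proof.
  intros x s d. unfold theta0, pull, sat.
  pose proof one_ne_zero as onz.
  destruct (pinv d) as [|k l].
  - destruct (em (q d = zero)) as [e|e]. rewrite e. pose proof (sat_iTrue (Mx x) s). tauto.
    pose proof (sat_iFalse (Mx x) s). split. tauto. intros e'; congruence.
  - destruct (em (exists m, k = iota m /\ length l = arity m)) as [[m [ek hl]]|hn].
    + assert (em' : mof k = m).
      { unfold mof. apply iota_inj. rewrite <- ek. symmetry.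
        apply (epsilon_spec (inhabits 0) (fun m => k = iota m)). eauto. }
      rewrite em'. subst k.
      assert (EA : isat arity (Mx x) s (iatom m l) <-> pos (x (pi (iota m :: map s l)))).
      { simpl. rewrite length_map. unfold pos. tauto. }
      destruct (em (exists m0, iota m = iota m0 /\ length l = arity m0 /\ pos (x (pi (iota m :: map s l))))) as [h|h].
      * assert (pos (x (pi (iota m :: map s l)))) by (destruct h as [? [? [? ?]]]; auto).
        destruct (em (q d = one)) as [e|e]. rewrite e. tauto.
        destruct (em (q d = zero)) as [e'|e']. simpl. rewrite e'. split; intros; [tauto|congruence].
        pose proof (sat_iFalse (Mx x) s). split; [tauto|congruence].
      * assert (~ pos (x (pi (iota m :: map s l)))) by (intros hp; apply h; eauto).
        destruct (em (q d = one)) as [e|e]. rewrite e. split; [tauto|congruence].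
        destruct (em (q d = zero)) as [e'|e']. simpl. rewrite e'. tauto.
        pose proof (sat_iFalse (Mx x) s). split; [tauto|congruence].
    + destruct (em (exists m0, k = iota m0 /\ length l = arity m0 /\ pos (x (pi (k :: map s l))))) as [h|h].
      { exfalso. apply hn. destruct h as [m [? [? ?]]]; eauto. }
      destruct (em (q d = zero)) as [e|e]. rewrite e. pose proof (sat_iTrue (Mx x) s). tauto.
      pose proof (sat_iFalse (Mx x) s). split. tauto. intros e'; congruence.
Qed.

Lemma theta0_free : forall d v, ifree (theta0 d) v -> In v (pinv d).
Proof.
  intros d v. unfold theta0. destruct (pinv d) as [|k l].
  - destruct (em _); intros h; exfalso; apply (free_iTrue v h).
  - destruct (em _).
    + destruct (em (q d = one)). simpl. auto.
      destruct (em (q d = zero)). simpl. auto. intros h; exfalso; apply (free_iTrue v h).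
    + destruct (em _); intros h; exfalso; apply (free_iTrue v h).
Qed.

Lemma theta0_wf : forall d, iwf (theta0 d) /\ forall {W} (ltW : W -> W -> Prop) a, rank_le ltW a (theta0 d).
Proof.
  intros d. unfold theta0. destruct (pinv d) as [|k l].
  - destruct (em _); simpl; split; tauto.
  - destruct (em _).
    + destruct (em (q d = one)). simpl; split; tauto.
      destruct (em (q d = zero)); simpl; split; tauto.
    + destruct (em _); simpl; split; tauto.
Qed.

Definition vars_lt (b d : K) := forall v, In v (pinv d) -> lt v b.

Definition BasicPsi (b : K) : inf_form K :=
  iconj Y (fun d => if em (vars_lt b d) then theta0 d else iFalse).

Lemma sat_BasicPsi : forall x s b, sat x s (BasicPsi b) <-> forall d, Y d -> vars_lt b d /\ sat x s (theta0 d).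
Proof.
  intros x s b. unfold sat, BasicPsi. simpl isat at 1. split.
  - intros h d hd. specialize (h d hd). destruct (em (vars_lt b d)). auto. exfalso; exact (sat_iFalse _ _ h).
  - intros h d hd. destruct (h d hd) as [h1 h2]. destruct (em (vars_lt b d)); tauto.
Qed.

Lemma Basic_lemma : forall {W} (ltW : W -> W -> Prop) a,
  SynW ltW a BasicPsi /\ PreSem (fun y => nbhd Y q y) BasicPsi.
Proof.
  intros W ltW a.
  assert (Hloc : loc BasicPsi).
  { intros b v [d [hd h]]. destruct (em (vars_lt b d)) as [e|e].
    apply e. apply theta0_free; auto. exfalso. apply (free_iTrue v h). }
  split.
  { split; [|split]; auto.
    - intros b d hd. destruct (em (vars_lt b d)). apply theta0_wf. simpl; tauto.
    - intros b d hd. destruct (em (vars_lt b d)). apply theta0_wf. simpl; tauto. }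
  intros x. split.
  - intros b f b' g hg [hle he] h. rewrite sat_BasicPsi in *. intros d hd. destruct (h d hd) as [h1 h2].
    split. intros v hv. eapply lt_le_trans; eauto.
    unfold sat in *. rewrite <- (isat_ext (Mx x) (theta0 d) f g); auto.
    intros v hv. apply he. apply h1. apply theta0_free. auto.
  - exists (fun _ _ _ => True). split.
    + intros k b f hf; exists b, f; split; auto; split; auto; apply ext_refl.
    + intros s _ _. unfold nbhd. split.
      * intros h.
        destruct (bounded_union Y (fun d v => In v (pinv d)) HY) as [c hc].
        { intros d _. apply list_bounded. }
        exists c. rewrite sat_BasicPsi. intros d hd. split. intros v hv. eapply hc; eauto.
        apply theta0_iff. auto.
      * intros [b h]. rewrite sat_BasicPsi in h. intros d hd. apply theta0_iff. apply h; auto.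
Qed.
End Basic.

Definition optlt {W} (ltW : W -> W -> Prop) (a b : option W) : Prop :=
  match a, b with Some x, Some y => ltW x y | Some _, None => True | _, _ => False end.

Lemma wo_option : forall {W} (ltW : W -> W -> Prop), well_order ltW -> well_order (optlt ltW).
Proof.
  intros W ltW [wf [irr [tr tri]]].
  assert (HS : forall x, Acc (optlt ltW) (Some x)).
  { intros x. induction x as [x IH] using (well_founded_ind wf). constructor.
    intros [y|] h; simpl in h; [apply IH; auto|contradiction]. }
  split; [|split; [|split]].
  - intros [x|]; auto. constructor. intros [y|] h; simpl in h; [apply HS|contradiction].
  - intros [x|]; simpl; auto.
  - intros [x|] [y|] [z|]; simpl; eauto; tauto.
  - intros [x|] [y|]; simpl; auto. destruct (tri x y) as [h|[h|h]]; subst; auto.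
Qed.

Lemma inj_option : forall {W} (g : W -> K), injective g -> exists g' : option W -> K, injective g'.
Proof.
  intros W g hg. exists (fun o => match o with Some w => pi [g w] | None => pi [] end).
  intros [x|] [y|] e; apply (proj1 Hpi) in e; try discriminate; auto.
  injection e; intros e'. f_equal. auto.
Qed.

Lemma wo_lex : forall (A : Type) (ltA : A -> A -> Prop) (B : A -> Type) (ltB : forall a, B a -> B a -> Prop),
  well_order ltA -> (forall a, well_order (ltB a)) -> well_order (Relation_Operators.lexprod A B ltA ltB).
Proof.
  intros A ltA B ltB HA HB.
  Local Ltac ip := repeat match goal with H : existT _ _ _ = existT _ _ _ |- _ => apply Eqdep.EqdepTheory.inj_pair2 in H end; subst.
  destruct HA as [wfA [irrA [trA triA]]].
  split; [|split; [|split]].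
  - apply Lexicographic_Product.wf_lexprod; auto. intros a; apply HB.
  - intros [a x] H. inversion H; subst.
    + apply (irrA _ H1).
    + ip. apply (proj1 (proj2 (HB a)) _ H1).
  - intros [a x] [b y] [c z] H1 H2.
    inversion H1; subst; inversion H2; subst; ip.
    + apply Relation_Operators.left_lex. eauto.
    + apply Relation_Operators.left_lex. auto.
    + apply Relation_Operators.left_lex. auto.
    + apply Relation_Operators.right_lex. eapply (proj1 (proj2 (proj2 (HB _)))); eauto.
  - intros [a x] [b y]. destruct (triA a b) as [h|[h|h]].
    + left. apply Relation_Operators.left_lex; auto.
    + subst. destruct (proj2 (proj2 (proj2 (HB b))) x y) as [h|[h|h]].
      left; apply Relation_Operators.right_lex; auto. subst; auto.
      right; right; apply Relation_Operators.right_lex; auto.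
    + right; right. apply Relation_Operators.left_lex; auto.
Qed.

Record RO : Type := mkRO { RW : Type; Rlt : RW -> RW -> Prop; Ra : RW;
  Rwo : well_order Rlt; Rinj : exists g : RW -> K, injective g }.

Definition Q (A : (K -> K) * (K -> K) -> Prop) : Prop :=
  exists R : RO, forall eta0, exists Phi, SynW (Rlt R) (Ra R) Phi /\ Sem (fun y => A (eta0, y)) Phi.

Lemma SynW_emb : forall {W W'} (ltW : W -> W -> Prop) (ltW' : W' -> W' -> Prop) (h : W -> W') a Phi,
  (forall x y, ltW x y -> ltW' (h x) (h y)) -> SynW ltW a Phi -> SynW ltW' (h a) Phi.
Proof. intros W W' ltW ltW' h a Phi Hh [h1 [h2 h3]]. split; auto. split; auto. intros b. eapply rank_emb; eauto. Qed.
Lemma SynW_mono : forall {W} (ltW : W -> W -> Prop) a a' Phi, well_order ltW ->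
  ltW a a' -> SynW ltW a Phi -> SynW ltW a' Phi.
Proof.
  intros W ltW a a' Phi Hwo h [h1 [h2 h3]]. split; auto. split; auto. intros b.
  eapply rank_mono; eauto. apply Hwo.
Qed.

Lemma Q_ext : forall A B, Q A -> (forall z, A z <-> B z) -> Q B.
Proof.
  intros A B [R HR] E. exists R. intros eta0. destruct (HR eta0) as [Phi [h1 h2]]. exists Phi. split; auto.
  eapply Sem_ext; eauto. intros y; simpl; auto.
Qed.

Lemma Q_compl : forall A, Q A -> Q (fun z => ~ A z).
Proof.
  intros A [R HR].
  destruct (Rinj R) as [g hg]. 
  pose (R' := mkRO (option (RW R)) (optlt (Rlt R)) None (wo_option _ (Rwo R)) (inj_option g hg)).
  exists R'. intros eta0. destruct (HR eta0) as [Phi [h1 h2]].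
  assert (h3 : SynW (optlt (Rlt R)) (Some (Ra R)) Phi).
  { apply (SynW_emb (Rlt R) (optlt (Rlt R)) Some); auto. }
  destruct (Neg_lemma (optlt (Rlt R)) (Some (Ra R)) None Phi _ h3 I h2) as [k1 k2].
  exists (Neg Phi). split; auto.
Qed.

Section UnionQ.
Variable A : K -> (K -> K) * (K -> K) -> Prop.
Hypothesis HA : forall i, Q (A i).

Definition Rf (i : K) : RO := proj1_sig (constructive_indefinite_description _ (HA i)).
Lemma Rf_spec : forall i eta0, exists Phi, SynW (Rlt (Rf i)) (Ra (Rf i)) Phi /\ Sem (fun y => A i (eta0, y)) Phi.
Proof. intros i. unfold Rf. destruct (constructive_indefinite_description _ (HA i)). simpl. auto. Qed.

Definition W0 := {i : K & RW (Rf i)}.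
Definition lt0 : W0 -> W0 -> Prop := Relation_Operators.lexprod K (fun i => RW (Rf i)) lt (fun i => Rlt (Rf i)).
Lemma wo0 : well_order lt0.
Proof. apply wo_lex. apply Hreg. intros i. apply Rwo. Qed.
Lemma inj0 : exists g : W0 -> K, injective g.
Proof.
  assert (G : forall i, {g : RW (Rf i) -> K | injective g}).
  { intros i. apply constructive_indefinite_description. apply Rinj. }
  exists (fun w => pi [projT1 w; proj1_sig (G (projT1 w)) (projT2 w)]).
  intros [i x] [j y] e. simpl in e. apply (proj1 Hpi) in e. injection e; intros e2 e1. subst j.
  apply (proj2_sig (G i)) in e2. subst. auto.
Qed.

Definition W3 := option (option (option W0)).
Definition lt3 : W3 -> W3 -> Prop := optlt (optlt (optlt lt0)).
Lemma wo3 : well_order lt3.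
Proof. apply wo_option, wo_option, wo_option, wo0. Qed.
Lemma inj3 : exists g : W3 -> K, injective g.
Proof.
  destruct inj0 as [g0 h0]. destruct (inj_option g0 h0) as [g1 h1].
  destruct (inj_option g1 h1) as [g2 h2]. exact (inj_option g2 h2).
Qed.

Lemma Q_union : Q (fun z => exists i, A i z).
Proof.
  exists (mkRO W3 lt3 None wo3 inj3). intros eta0. simpl.
  assert (HP : forall i, {Phi | SynW (Rlt (Rf i)) (Ra (Rf i)) Phi /\ Sem (fun y => A i (eta0, y)) Phi}).
  { intros i. apply constructive_indefinite_description. apply Rf_spec. }
  set (Phi := fun i => proj1_sig (HP i)).
  assert (Hs : forall i, SynW lt3 (Some (Some None)) (Phi i)).
  { intros i. apply (SynW_mono lt3 (Some (Some (Some (existT _ i (Ra (Rf i))))))). apply wo3. simpl; auto.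
    apply (SynW_emb (Rlt (Rf i)) lt3 (fun w => Some (Some (Some (existT _ i w))))).
    intros x y h. simpl. apply Relation_Operators.right_lex. auto.
    apply (proj2_sig (HP i)). }
  destruct (Union_lemma lt3 (Some (Some None)) Phi (fun i y => A i (eta0, y)) Hs) as [k1 k2].
  { intros i. apply (proj2_sig (HP i)). }
  destruct (Cl_lemma lt3 (Some (Some None)) (Some None) None _ _ k1 I I k2) as [c1 c2].
  exists (Cl (BigOr Phi)). split; auto.
Qed.
End UnionQ.

Definition RO_nat : RO.
Proof.
  refine (mkRO nat Peano.lt 2 _ _).
  - split; [apply Wf_nat.lt_wf|split; [apply Nat.lt_irrefl|split; [apply Nat.lt_trans|apply Nat.lt_trichotomy]]].
  - exists iota. intros x y e. apply iota_inj; auto.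
Defined.

Lemma Q_simple : forall (c : ((K -> K) -> Prop)) (Y : K -> Prop) (q : K -> K), smaller Y ->
  Q (fun z => c (fst z) /\ nbhd Y q (snd z)).
Proof.
  intros c Y q HY. exists RO_nat. intros eta0. simpl.
  destruct (classic (c eta0)) as [hc|hc].
  - destruct (Basic_lemma Y q HY (@Peano.lt) 0) as [k1 k2].
    destruct (Cl_lemma (@Peano.lt) 0 1 2 _ _ k1 (le_n _) (le_n _) k2) as [c1 c2].
    exists (Cl (BasicPsi Y q)). split; auto. eapply Sem_ext; eauto. simpl. tauto.
  - destruct (Empty_lemma (@Peano.lt) 0) as [k1 k2].
    destruct (Cl_lemma (@Peano.lt) 0 1 2 _ _ k1 (le_n _) (le_n _) k2) as [c1 c2].
    exists (Cl (fun _ => iFalse)). split; auto. eapply Sem_ext; eauto. simpl. tauto.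
Qed.

Lemma Q_all : forall A, kBorel A -> Q A.
Proof.
  intros A H. induction H.
  - eapply Q_ext. apply (Q_simple (fun _ => False) (fun _ => False) (fun _ => bot)).
    apply (bounded_small _ bot). tauto. simpl. tauto.
  - eapply Q_ext. apply (Q_simple (fun z => nbhd X p z) Y q); auto. simpl. tauto.
  - apply Q_compl; auto.
  - apply Q_union; auto.
  - apply (Q_ext (fun z => ~ exists i, ~ F i z)).
    apply Q_compl. apply Q_union. intros i. apply Q_compl. auto.
    intros z. split. intros h i. apply NNPP. intros h'. apply h; eauto. intros h [i h']. auto.
  - eapply Q_ext; eauto.
Qed.

Lemma final_iff : forall S Phi, Sem S Phi -> loc Phi -> (forall s xi, bijective s -> (S (pull s xi) <-> S xi)) ->
  forall xi f, S xi <-> sat xi f (Phi bot).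
Proof.
  intros S Phi HS Hloc Hinv xi f. destruct (HS xi) as [Hmono [Hcl [D [HDd HT]]]].
  assert (ok0 : forall g, ok bot g). { intros g a a' h. exfalso. exact (bot_min _ h). }
  split.
  - intros hS. apply NNPP. intros hn.
    assert (hn' : ~ forall b' g, ok b' g -> ext bot f b' g -> exists b'' h, ok b'' h /\ ext b' g b'' h /\ sat xi h (Phi b'')).
    { intros h. apply hn. apply Hcl; auto. }
    apply hn'. intros b' g hg he. apply NNPP. intros hn2.
    destruct (BCT D HDd b' g hg) as [s [hs [hsg hm]]].
    rewrite <- (Hinv s xi hs) in hS. rewrite (HT s hs hm) in hS. destruct hS as [b hb].
    apply hn2. exists (max2 b b'), s. split. apply ok_inj; auto. split.
    split. apply max2_r. intros a ha. symmetry. auto.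
    apply (Hmono b s); auto. apply ok_inj; auto. apply ext_same, max2_l.
  - intros h. destruct (BCT D HDd bot f (ok0 f)) as [s [hs [_ hm]]].
    rewrite <- (Hinv s xi hs). rewrite (HT s hs hm). exists bot.
    apply (sat_loc xi Phi Hloc bot f); auto. intros a ha. exfalso. exact (bot_min _ ha).
Qed.

Theorem main_inner : forall T : fo_form -> Prop,
  (forall (W : Type) (ltW : W -> W -> Prop),
     well_order ltW -> (exists g : W -> K, injective g) ->
     forall alpha : W,
       exists eta eta' : K -> K,
         models arity T (M_of lt iota pi arity eta)
         /\ models arity T (M_of lt iota pi arity eta')
         /\ inf_equiv K ltW alpha arity (M_of lt iota pi arity eta) (M_of lt iota pi arity eta')
         /\ ~ isomorphic arity (M_of lt iota pi arity eta) (M_of lt iota pi arity eta')) ->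
  ~ kBorel (iso_T lt iota pi arity T).
Proof.
  intros T Hyp HB. destruct (Q_all _ HB) as [R HR].
  destruct (Hyp (RW R) (Rlt R) (Rwo R) (Rinj R) (Ra R)) as [eta [eta' [m1 [m2 [heq hni]]]]].
  destruct (HR eta) as [Phi [[Hwf [Hloc Hrk]] Hsem]].
  pose proof (final_iff _ Phi Hsem Hloc (fun s xi hs => isoT_inv T eta s xi hs)) as FI.
  assert (S1 : iso_T lt iota pi arity T (eta, eta)).
  { left. simpl. split; auto. split; auto. exists (fun a => a). split. split. intros a b e; auto.
    intros y; exists y; auto. intros m l hl. rewrite map_id. tauto. }
  assert (S2 : forall s, isat arity (M_of lt iota pi arity eta') s (Phi bot)).
  { apply heq; auto. intros v hv. exact (bot_min _ (Hloc _ _ hv)).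
    intros s. apply (FI eta s). auto. }
  apply (FI eta' (fun a => a)) in S2. destruct S2 as [[h1 [h2 h3]]|[h1 h2]]; auto.
Qed.

End Main.

Theorem theorem4p4 (K : Type) (lt : K -> K -> Prop) (iota : nat -> K)
  (pi : list K -> K) (arity : nat -> nat) (T : fo_form -> Prop) :
  regular_cardinal lt ->
  canonical_omega lt iota ->
  bijective pi ->
  (forall f, T f -> fo_sentence f) ->
  complete_theory arity T ->
  (forall (W : Type) (ltW : W -> W -> Prop),
     well_order ltW -> (exists g : W -> K, injective g) ->
     forall alpha : W,
       exists eta eta' : K -> K,
         models arity T (M_of lt iota pi arity eta)
         /\ models arity T (M_of lt iota pi arity eta')
         /\ inf_equiv K ltW alpha arity (M_of lt iota pi arity eta) (M_of lt iota pi arity eta')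
         /\ ~ isomorphic arity (M_of lt iota pi arity eta) (M_of lt iota pi arity eta')) ->
  ~ kBorel (iso_T lt iota pi arity T).
Proof.
  intros Hreg Hiota Hpi _ _ Hyp. exact (main_inner K lt Hreg iota Hiota pi Hpi arity T Hyp).
Qed.
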